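(* Let $A$ be a finite skew brace such that $\Lambda(A)$ has exactly one vertex and $\ker\lambda\cap\operatorname{Fix}(A)=\{0\}$. Then $(\operatorname{Fix}(A),+)$ is an abelian group of odd order, $\operatorname{Fix}(A)$ is a trivial skew brace, and $A$ is isomorphic to the skew brace on $\operatorname{Fix}(A)\times\mathbb{Z}/2\mathbb{Z}$ with operations \[(f_1,k_1)+(f_2,k_2)=\big(f_1+(-1)^{k_1}f_2,\,k_1+k_2\big),\qquad (f_1,k_1)\circ(f_2,k_2)=\big((-1)^{k_2}f_1+(-1)^{k_1}f_2,\,k_1+k_2\big).\] Conversely, if $F$ is a non-trivial abelian group of odd order, then $A=F\times\mathbb{Z}/2\mathbb{Z}$ with these operations is a skew brace with $\operatorname{Fix}(A)=F\times\{0\}$, $\ker\lambda=\{0\}\times\mathbb{Z}/2\mathbb{Z}$, and $\Lambda(A)$ has exactly one vertex.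
   Context: A skew brace is a triple $(A,+,\circ)$ where $(A,+)$ and $(A,\circ)$ are groups with $a\circ(b+c)=a\circ b-a+a\circ c$. $\lambda_a(b)=-a+a\circ b$ gives a homomorphism $\lambda\colon(A,\circ)\to\operatorname{Aut}(A,+)$ with kernel $\ker\lambda$. $\operatorname{Fix}(A)=\{a\in A:\lambda_x(a)=a\ \forall x\in A\}$. A trivial skew brace is one with $a+b=a\circ b$ for all $a,b$. $\Lambda(A)$ is the graph whose vertices are the $\lambda$-orbits of size $>1$, two distinct vertices $L_1,L_2$ adjacent iff $\gcd(|L_1|,|L_2|)\ne1$. *)

(* Defs.v *)
From HB Require Import structures.
From mathcomp Require Import all_boot all_order all_algebra.
Set Implicit Arguments. Unset Strict Implicit. Unset Printing Implicit Defensive.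

Record skewBrace (T : Type) := SkewBrace {
  sb_add : T -> T -> T;
  sb_opp : T -> T;
  sb_zero : T;
  sb_circ : T -> T -> T;
  sb_cinv : T -> T;
  sb_one : T;
  sb_addA : forall a b c, sb_add a (sb_add b c) = sb_add (sb_add a b) c;
  sb_add0 : forall a, sb_add sb_zero a = a;
  sb_addN : forall a, sb_add (sb_opp a) a = sb_zero;
  sb_circA : forall a b c, sb_circ a (sb_circ b c) = sb_circ (sb_circ a b) c;
  sb_circ1 : forall a, sb_circ sb_one a = a;
  sb_circV : forall a, sb_circ (sb_cinv a) a = sb_one;
  sb_dist : forall a b c,
    sb_circ a (sb_add b c) = sb_add (sb_add (sb_circ a b) (sb_opp a)) (sb_circ a c)
}.

Section SkewBraceDefs.
Variables (T : finType) (B : skewBrace T).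

Definition sb_lambda (a b : T) : T := sb_add B (sb_opp B a) (sb_circ B a b).

Definition sb_ker : {set T} := [set a | [forall b, sb_lambda a b == b]].

Definition sb_Fix : {set T} := [set a | [forall x, sb_lambda x a == a]].

Definition lambda_orbit (a : T) : {set T} := [set sb_lambda x a | x : T].

Definition Lambda_vertices : {set {set T}} :=
  [set O in [set lambda_orbit a | a : T] | 1 < #|O|].

End SkewBraceDefs.

(* The operations on F x Z/2Z (Z/2Z represented by bool, addition = xor,
   (-1)^k f = if k then -f else f):
   (f1,k1)+(f2,k2) = (f1 + (-1)^k1 f2, k1+k2)
   (f1,k1)o(f2,k2) = ((-1)^k2 f1 + (-1)^k1 f2, k1+k2) *)
Definition sgn_act (T : Type) (opp : T -> T) (k : bool) (f : T) : T :=
  if k then opp f else f.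

Definition sd_add (T : Type) (add : T -> T -> T) (opp : T -> T)
    (x y : T * bool) : T * bool :=
  (add x.1 (sgn_act opp x.2 y.1), x.2 (+) y.2).

Definition sd_circ (T : Type) (add : T -> T -> T) (opp : T -> T)
    (x y : T * bool) : T * bool :=
  (add (sgn_act opp y.2 x.1) (sgn_act opp x.2 y.1), x.2 (+) y.2).

(* Main.v *)
Require Import Defs.
From HB Require Import structures.
From mathcomp Require Import all_boot all_order all_algebra all_fingroup all_solvable.
From mathcomp Require Import zify.
Import GRing.Theory.
Set Implicit Arguments. Unset Strict Implicit. Unset Printing Implicit Defensive.

Section Grp.
Variables (T : Type) (op : T -> T -> T) (inv : T -> T) (e : T).
Hypotheses (opA : forall a b c, op a (op b c) = op (op a b) c)
  (op0 : forall a, op e a = a) (opN : forall a, op (inv a) a = e).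

Lemma gNr a : op a (inv a) = e.
Proof.
by rewrite -[LHS]op0 -(opN (inv a)) -opA (opA (inv a) a) opN op0 opN.
Qed.
Lemma gr0 a : op a e = a.
Proof. by rewrite -(opN a) opA gNr op0. Qed.
Lemma gKl a b : op (inv a) (op a b) = b.
Proof. by rewrite opA opN op0. Qed.
Lemma gKr a b : op a (op (inv a) b) = b.
Proof. by rewrite opA gNr op0. Qed.
Lemma gcanl a b c : op a b = op a c -> b = c.
Proof. by move=> h; rewrite -(gKl a b) h gKl. Qed.
Lemma gcanr a b c : op b a = op c a -> b = c.
Proof. by move=> h; rewrite -(gr0 b) -(gNr a) opA h -opA gNr gr0. Qed.
Lemma ginvK a : inv (inv a) = a.
Proof. by apply: (@gcanr (inv a)); rewrite opN gNr. Qed.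
Lemma ginvD a b : inv (op a b) = op (inv b) (inv a).
Proof. by apply: (@gcanr (op a b)); rewrite opN -opA (opA (inv a)) opN op0 opN. Qed.
Lemma ginv0 : inv e = e.
Proof. by rewrite -{2}(opN e) gr0. Qed.
Lemma ginv_eq a b : op a b = e -> a = inv b.
Proof. by move=> h; apply: (@gcanr b); rewrite opN. Qed.
End Grp.

Lemma odd_invol (T : finType) (S : {set T}) (g : T -> T) (x0 : T) :
  x0 \in S -> (forall x, x \in S -> g x \in S) -> (forall x, g (g x) = x) ->
  (forall x, x \in S -> g x = x -> x = x0) -> g x0 = x0 -> odd #|S|.
Proof.
move=> + + gK + gx0.
elim: {S}_.+1 {-2}S (ltnSn #|S|) => // n IH S hn hx0 hS hfix.
case: (boolP (S == [set x0])) => [/eqP -> |hne]; first by rewrite cards1.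
have [y hy hyx] : exists2 y, y \in S & y != x0.
  have : S :\ x0 != set0.
    apply: contra hne => /eqP h0; rewrite eqEsubset sub1set hx0 andbT.
    apply/subsetP => w hw; rewrite inE; apply: contraT => hw2.
    have : w \in S :\ x0 by rewrite !inE hw2 hw.
    by rewrite h0 inE.
  by case/set0Pn => w; rewrite !inE => /andP[h1 h2]; exists w.
have hgy : g y != y by apply: contra hyx => /eqP /(hfix _ hy) ->.
set S' := S :\: [set y; g y].
have cS : #|S| = (#|S'|).+2.
  rewrite -(cardsID [set y; g y] S) (setIidPr _) ?cards2 1?eq_sym ?hgy //.
  by rewrite subUset !sub1set hy hS.
rewrite cS /= negbK; apply: IH.
- by rewrite cS in hn; lia.
- rewrite !inE hx0 andbT negb_or eq_sym hyx /=.
  by apply: contra hyx => /eqP e; rewrite -(gK y) -e gx0.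
- move=> x; rewrite !inE negb_or => /andP[/andP[h1 h2] h3].
  rewrite hS // andbT negb_or; apply/andP; split.
    by apply: contra h2 => /eqP <-; rewrite gK.
  by apply: contra h1 => /eqP e; rewrite -(gK x) e gK.
- by move=> x; rewrite inE => /andP[_ hx]; exact: hfix.
Qed.

Section Brace.
Variables (T : finType) (B : skewBrace T).
Local Notation "a ⊕ b" := (sb_add B a b) (at level 50, left associativity).
Local Notation "⊖ a" := (sb_opp B a) (at level 35, right associativity).
Local Notation "a ⊙ b" := (sb_circ B a b) (at level 40, left associativity).
Local Notation z := (sb_zero B).
Local Notation lam := (sb_lambda B).
Local Notation F := (sb_Fix B).

Let addA := sb_addA B. Let add0 := sb_add0 B. Let addN := sb_addN B.
Let addNr := @gNr _ _ _ _ addA add0 addN. Let addr0 := @gr0 _ _ _ _ addA add0 addN.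
Let addKl := @gKl _ _ _ _ addA add0 addN. Let addKr := @gKr _ _ _ _ addA add0 addN.
Let addcanl := @gcanl _ _ _ _ addA add0 addN. Let addcanr := @gcanr _ _ _ _ addA add0 addN.
Let oppK := @ginvK _ _ _ _ addA add0 addN. Let oppD := @ginvD _ _ _ _ addA add0 addN.
Let opp0 := @ginv0 _ _ _ _ addA add0 addN.
Let circA := sb_circA B. Let circ1 := sb_circ1 B. Let circV := sb_circV B.
Let circVr := @gNr _ _ _ _ circA circ1 circV. Let circr1 := @gr0 _ _ _ _ circA circ1 circV.
Let circcanl := @gcanl _ _ _ _ circA circ1 circV.

Lemma circ_r0 a : a ⊙ z = a.
Proof.
have h := sb_dist B a z z; rewrite add0 -addA in h.
have := congr1 (sb_add B (⊖ (a ⊙ z))) h.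
rewrite addN addA addN add0 => /esym h2.
by rewrite -(addKr a (a ⊙ z)) h2 addr0.
Qed.

Lemma one_zero : sb_one B = z.
Proof. by rewrite -(circ_r0 (sb_one B)) circ1. Qed.

Lemma circE a b : a ⊙ b = a ⊕ lam a b.
Proof. by rewrite /sb_lambda addKr. Qed.

Lemma lamD a b c : lam a (b ⊕ c) = lam a b ⊕ lam a c.
Proof. by rewrite /sb_lambda sb_dist !addA. Qed.

Lemma lam0 a : lam a z = z.
Proof. by rewrite /sb_lambda circ_r0 addN. Qed.

Lemma lamz b : lam z b = b.
Proof. by rewrite /sb_lambda -{2}one_zero circ1 opp0 add0. Qed.

Lemma lamM a b c : lam (a ⊙ b) c = lam a (lam b c).
Proof.
rewrite {1}/sb_lambda -circA (circE b c) sb_dist -!addA addKl.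
by [].
Qed.

Lemma lamN a b : lam a (⊖ b) = ⊖ lam a b.
Proof. by apply: (@ginv_eq _ _ _ _ addA add0 addN); rewrite -lamD addN lam0. Qed.

Lemma lamK a b : lam (sb_cinv B a) (lam a b) = b.
Proof. by rewrite -lamM circV one_zero lamz. Qed.

Lemma lam_inj a : injective (lam a).
Proof. by move=> x y h; rewrite -(lamK a x) h lamK. Qed.

Lemma inFP x : reflect (forall y, lam y x = x) (x \in F).
Proof. by rewrite inE; apply: (iffP forallP) => h y; [apply/eqP|apply/eqP]. Qed.

Lemma F0 : z \in F.
Proof. by apply/inFP => y; rewrite lam0. Qed.

Lemma FD x y : x \in F -> y \in F -> x ⊕ y \in F.
Proof. by move=> /inFP hx /inFP hy; apply/inFP => w; rewrite lamD hx hy. Qed.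

Lemma FN x : x \in F -> ⊖ x \in F.
Proof. by move=> /inFP hx; apply/inFP => w; rewrite lamN hx. Qed.

Lemma FDr x y : x \in F -> (y ⊕ x \in F) = (y \in F).
Proof.
move=> hx; apply/idP/idP => [h|h]; last exact: FD.
by rewrite -(addr0 y) -(addNr x) addA FD // FN.
Qed.

Lemma FDl x y : x \in F -> (x ⊕ y \in F) = (y \in F).
Proof.
move=> hx; apply/idP/idP => [h|h]; last exact: FD.
by rewrite -(addKl x y) FD // FN.
Qed.

Lemma circF x y : y \in F -> x ⊙ y = x ⊕ y.
Proof. by move=> /inFP h; rewrite circE h. Qed.

Lemma lamF x y : (lam x y \in F) = (y \in F).
Proof.
apply/idP/idP => h; last by move/inFP: (h) => h1; rewrite h1.
by move/inFP: (h) => /(_ (sb_cinv B x)); rewrite lamK => ->.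
Qed.

Lemma orbit_in a x : lam x a \in lambda_orbit B a.
Proof. by apply/imsetP; exists x. Qed.

Lemma orbit_self a : a \in lambda_orbit B a.
Proof. by have := orbit_in a z; rewrite lamz. Qed.

Lemma orbit_big a : (1 < #|lambda_orbit B a|) = (a \notin F).
Proof.
apply/idP/idP => h.
  apply/negP => /inFP ha; move: h.
  suff -> : lambda_orbit B a = [set a] by rewrite cards1.
  by apply/setP => b; rewrite inE; apply/imsetP/eqP => [[x _ ->]|->]; [|exists z]; rewrite ?ha ?lamz.
have [x hx] : exists x, lam x a != a.
  by apply/existsP; move: h; rewrite inE negb_forall.
rewrite (cardsD1 a) orbit_self add1n ltnS card_gt0; apply/set0Pn; exists (lam x a).
by rewrite !inE hx orbit_in.
Qed.

Lemma circM_canl a b c : a ⊙ b = a ⊙ c -> b = c.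
Proof. exact: circcanl. Qed.


Section Main.
Hypothesis H1 : #|Lambda_vertices B| = 1.
Hypothesis H2 : sb_ker B :&: F = [set z].


Lemma exists_notF : exists a0, a0 \notin F.
Proof.
have /cards1P [O hO] : #|Lambda_vertices B| == 1 by rewrite H1.
move: (set11 O); rewrite -hO inE => /andP[/imsetP[a0 _ ->] big].
by exists a0; rewrite -orbit_big.
Qed.

Lemma transitive_notF a b : a \notin F -> b \notin F -> exists x, lam x a = b.
Proof.
have /cards1P [O hO] : #|Lambda_vertices B| == 1 by rewrite H1.
have key c : c \notin F -> lambda_orbit B c = O.
  move=> hc; apply/set1P; rewrite -hO inE orbit_big hc andbT.
  by apply/imsetP; exists c.
move=> ha hb; have : b \in lambda_orbit B a by rewrite key // -(key b hb) orbit_self.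
by case/imsetP => x _ ->; exists x.
Qed.

Definition stab a := [set x | lam x a == a].
Definition rep a b := odflt z [pick x | lam x a == b].

Lemma repP a b : b \in lambda_orbit B a -> lam (rep a b) a = b.
Proof.
case/imsetP => x _ ->; rewrite /rep; case: pickP => [y /eqP //|/(_ x)].
by rewrite eqxx.
Qed.

Lemma card_orbit_stab a : #|T| = #|lambda_orbit B a| * #|stab a|.
Proof.
apply/eqP; rewrite eqn_leq; apply/andP; split.
  pose f x := (lam x a, sb_cinv B (rep a (lam x a)) ⊙ x).
  have fi : injective f.
    move=> x y [e1 e2]; rewrite e1 in e2; exact: circcanl e2.
  rewrite -cardsT -(card_imset _ fi) -cardsX subset_leq_card //.
  apply/subsetP => p /imsetP[x _ ->]; rewrite inE /= orbit_in /= inE.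
  rewrite (@lamM (sb_cinv B (rep a (lam x a))) x a).
  have := @repP a _ (orbit_in a x); set b := lam x a => hb.
  by rewrite -{2}hb lamK.
pose g p := rep a p.1 ⊙ p.2.
have gi : {in setX (lambda_orbit B a) (stab a) &, injective g}.
  move=> [b s] [b' s'] /setXP[/= hb hs] /setXP[/= hb' hs'] /= e.
  have eb : b = b'.
    move: (congr1 (fun w => lam w a) e); rewrite !lamM.
    move: hs hs'; rewrite !inE => /eqP -> /eqP ->.
    by rewrite !repP //.
  by subst b'; congr pair; exact: circcanl e.
by rewrite -(cardsX (lambda_orbit B a) (stab a)) -(card_in_imset gi) -cardsT subset_leq_card // subsetT.
Qed.


Lemma card_FC : #|F| = #|~: F|.
Proof.
have [a0 ha0] := exists_notF.
have eO : lambda_orbit B a0 = ~: F.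
  apply/setP => b; rewrite inE; apply/idP/idP.
    by case/imsetP => x _ ->; rewrite lamF.
  by move=> hb; have [x <-] := transitive_notF ha0 hb; exact: orbit_in.
have dv : #|~: F| %| #|F| + #|~: F|.
  by rewrite cardsC (card_orbit_stab a0) eO dvdn_mulr.
rewrite dvdn_addl // in dv.
have m0 : 0 < #|F| by rewrite card_gt0; apply/set0Pn; exists z; exact: F0.
apply/eqP; rewrite eqn_leq (dvdn_leq m0 dv) andbT.
rewrite -(@card_in_imset _ _ (sb_add B a0) F); last by move=> x y _ _; exact: addcanl.
apply: subset_leq_card; apply/subsetP => b /imsetP[f hf ->].
by rewrite inE; apply: contra ha0 => h; rewrite -(FDr a0 hf).
Qed.

Lemma notF_diff a b : a \notin F -> b \notin F -> ⊖ a ⊕ b \in F.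
Proof.
move=> ha hb.
have e : sb_add B a @: F = ~: F.
  apply/eqP; rewrite eqEcard -card_FC card_in_imset ?leqnn ?andbT;
    last by move=> x y _ _; exact: addcanl.
  apply/subsetP => w /imsetP[f hf ->].
  by rewrite inE; apply: contra ha => h; rewrite -(FDr a hf).
have : b \in ~: F by rewrite inE.
by rewrite -e => /imsetP[f hf ->]; rewrite addKl.
Qed.

Lemma notF_add a f : a \notin F -> f \in F -> a ⊕ f \notin F.
Proof. by move=> ha hf; rewrite FDr. Qed.

Section Base.
Variable a : T.
Hypothesis ha : a \notin F.

Definition cc x := ⊖ a ⊕ lam x a.

Lemma ccF x : cc x \in F.
Proof. by apply: notF_diff => //; rewrite lamF. Qed.

Lemma lam_a x : lam x a = a ⊕ cc x.
Proof. by rewrite /cc addKr. Qed.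

Lemma lam_af x f : f \in F -> lam x (a ⊕ f) = a ⊕ cc x ⊕ f.
Proof. by move=> /inFP hf; rewrite lamD hf lam_a. Qed.

Lemma ccM x y : cc (x ⊙ y) = cc x ⊕ cc y.
Proof.
by rewrite {1}/cc lamM lam_a lam_af ?ccF // -addA addKl.
Qed.

Lemma cc_onto f : f \in F -> exists x, cc x = f.
Proof.
move=> hf; have [x hx] := transitive_notF ha (notF_add ha hf).
by exists x; rewrite /cc hx addKl.
Qed.

Lemma aaF : a ⊕ a \in F.
Proof.
apply/negPn/negP => h; have := notF_diff ha h; rewrite addKl.
by move/negbTE: ha => ->.
Qed.

Lemma conjF f : f \in F -> f ⊕ (a ⊕ f) = a.
Proof.
move=> hf; have [x hx] := cc_onto hf.
move/inFP: aaF => /(_ x); rewrite lamD lam_a hx -addA => /addcanl.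
by [].
Qed.

Lemma eq1 f : f \in F -> f ⊕ a = a ⊕ ⊖ f.
Proof.
move=> hf; have h := conjF (FN hf).
by rewrite -{1}h addKr.
Qed.

Lemma commF f g : f \in F -> g \in F -> f ⊕ g = g ⊕ f.
Proof.
move=> hf hg.
have e1 := eq1 (FD hf hg).
have e2 : f ⊕ g ⊕ a = a ⊕ (⊖ f ⊕ ⊖ g).
  by rewrite -addA eq1 // addA eq1 // addA.
rewrite e1 in e2; move/addcanl: e2; rewrite -oppD => e3.
by rewrite -(oppK (f ⊕ g)) e3 oppK.
Qed.

Lemma ccD x f : f \in F -> cc (x ⊕ f) = cc x ⊕ cc f.
Proof. by move=> hf; rewrite -circF // ccM. Qed.

Lemma cc0 : cc z = z.
Proof. by rewrite /cc lamz addN. Qed.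

Lemma ccN f : f \in F -> cc (⊖ f) = ⊖ cc f.
Proof.
move=> hf; apply: (@ginv_eq _ _ _ _ addA add0 addN).
by rewrite -ccD // addN cc0.
Qed.

Lemma cc_double x : x \in F -> cc (cc x) = cc x ⊕ cc x.
Proof.
move=> hx.
have e : x ⊙ a = a ⊕ (⊖ x ⊕ cc x).
  by rewrite circE lam_a addA -(oppK x) eq1 ?FN // oppK addA.
have := ccM x a; rewrite e ccD; last by rewrite FD ?FN ?ccF.
rewrite ccD ?FN ?ccF // ccN // (commF (ccF x) (ccF a)) => /addcanl.
by move=> h; rewrite -{1}(addKr (cc x) (cc (cc x))) h.
Qed.

Lemma cc_kerF x : x \in F -> cc x = z -> x = z.
Proof.
move=> hx h0; apply/set1P; rewrite -H2 inE hx andbT inE.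
apply/forallP => b; apply/eqP.
case: (boolP (b \in F)) => hb; first by move/inFP: hb.
have hf := notF_diff ha hb.
by rewrite -(addKr a b) lam_af // h0 addr0.
Qed.

Lemma cc_injF x y : x \in F -> y \in F -> cc x = cc y -> x = y.
Proof.
move=> hx hy e.
have : x ⊕ ⊖ y = z.
  apply: cc_kerF; first by rewrite FD ?FN.
  by rewrite ccD ?FN // ccN // e addNr.
by move=> h; rewrite -(addr0 x) -(addN y) addA h add0.
Qed.

Lemma cc_imF : [set cc x | x in F] = F.
Proof.
apply/eqP; rewrite eqEcard card_in_imset ?leqnn ?andbT;
  last by move=> x y hx hy; exact: cc_injF.
by apply/subsetP => w /imsetP[x _ ->]; exact: ccF.
Qed.

Lemma ccFF y : y \in F -> cc y = y ⊕ y.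
Proof.
by move=> hy; move: hy; rewrite -cc_imF => /imsetP[x hx ->]; rewrite cc_double.
Qed.

Lemma no2 y : y \in F -> y ⊕ y = z -> y = z.
Proof. by move=> hy h; apply: cc_kerF => //; rewrite ccFF. Qed.

Lemma aa0 : a ⊕ a = z.
Proof.
apply: no2; first exact: aaF.
have h := eq1 aaF; rewrite -addA in h; move/addcanl: h => h.
by rewrite {1}h addN.
Qed.

End Base.

Lemma exists_e : exists2 e, e \notin F & lam e e = e.
Proof.
have [a0 ha0] := exists_notF.
have : ⊖ cc a0 a0 \in [set cc a0 x | x in F] by rewrite (cc_imF ha0) FN ?ccF.
case/imsetP => g hg eg.
exists (a0 ⊕ g); first exact: notF_add ha0 hg.
rewrite lam_af // ccD // -eg addNr addr0 //.
Qed.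

Lemma odd_F : odd #|F|.
Proof.
have [a0 ha0] := exists_notF.
apply: (@odd_invol _ F (sb_opp B) z F0 FN oppK); last exact: opp0.
move=> y hy hyy; apply: (no2 ha0 hy).
by rewrite -{2}hyy addNr.
Qed.


Lemma notF_opp x : x \notin F -> ⊖ x = x.
Proof. by move=> hx; apply/esym/(@ginv_eq _ _ _ _ addA add0 addN); exact: aa0. Qed.

Lemma notF_addF x y : x \notin F -> y \notin F -> x ⊕ y \in F.
Proof. by move=> hx hy; rewrite -{1}(notF_opp hx) notF_diff. Qed.

Section Iso.
Variable e : T.
Hypotheses (he : e \notin F) (hee : lam e e = e).

Definition phi x := if x \in F then (x, false) else (x ⊕ e, true).

Let eN : ⊖ e = e. Proof. exact: notF_opp. Qed.
Let ee : e ⊕ e = z. Proof. exact: aa0. Qed.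
Let cF x y : x \in F -> y \in F -> x ⊕ y = y ⊕ x. Proof. by move=> hx hy; apply: (commF he hx hy). Qed.

Lemma xeF x : x \notin F -> x ⊕ e \in F.
Proof. by move=> hx; exact: notF_addF. Qed.

Lemma phi_inj : injective phi.
Proof.
move=> x y; rewrite /phi.
case: (boolP (x \in F)) => hx; case: (boolP (y \in F)) => hy //; first by case.
by case=> /addcanr.
Qed.

Lemma phi_im : phi @: [set: T] = [set p : T * bool | p.1 \in F].
Proof.
apply/setP => [[f b]]; rewrite inE /=; apply/imsetP/idP.
  case=> x _; rewrite /phi; case: ifP => hx [-> _] //.
  by apply: xeF; rewrite hx.
move=> hf; case: b.
  exists (f ⊕ e) => //; rewrite /phi FDl // (negbTE he).
  by rewrite -addA ee addr0.
by exists f => //; rewrite /phi hf.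
Qed.

Lemma phi_add x y : phi (x ⊕ y) = sd_add (sb_add B) (sb_opp B) (phi x) (phi y).
Proof.
rewrite /phi /sd_add /sgn_act.
case: (boolP (x \in F)) => hx; case: (boolP (y \in F)) => hy /=.
- by rewrite FD.
- by rewrite FDl // (negbTE hy) addA.
- by rewrite FDr // (negbTE hx) -!addA (eq1 he hy).
rewrite notF_addF // oppD eN (notF_opp hy).
by rewrite -addA (addA e) ee add0.
Qed.

Lemma phi_circ x y : phi (x ⊙ y) = sd_circ (sb_add B) (sb_opp B) (phi x) (phi y).
Proof.
case: (boolP (y \in F)) => hy.
  have py : phi y = (y, false) by rewrite /phi hy.
  by rewrite circF // phi_add py /sd_add /sd_circ /sgn_act /=.
set f := y ⊕ e.
have hf : f \in F by exact: xeF.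
have ey : y = f ⊕ e by rewrite /f -addA ee addr0.
have hl : lam x y = f ⊕ e ⊕ cc e x by rewrite ey lamD (inFP _ hf) lam_a addA.
have hcx : cc e x \in F by exact: ccF.
have hlF : lam x y \notin F by rewrite lamF.
have pl : phi (lam x y) = (f ⊕ ⊖ cc e x, true).
  rewrite /phi (negbTE hlF) hl -(addA (f ⊕ e) (cc e x) e) (eq1 he hcx) addA.
  by rewrite -(addA f e e) ee addr0.
have py : phi y = (f, true) by rewrite /phi (negbTE hy).
rewrite circE phi_add pl py /sd_add /sd_circ /sgn_act /=.
case: (boolP (x \in F)) => hx.
  have px : phi x = (x, false) by rewrite /phi hx.
  rewrite px /= (ccFF he hx) oppD (addA f (⊖ x) (⊖ x)) (cF hf (FN hx)).
  by rewrite -(addA (⊖ x) f (⊖ x)) addKr (cF hf (FN hx)).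
set h := x ⊕ e.
have hh : h \in F by exact: xeF.
have px : phi x = (h, true) by rewrite /phi (negbTE hx).
have ex : x = e ⊕ ⊖ h by rewrite -(eq1 he hh) /h -addA ee addr0.
have ccx : cc e x = ⊖ h ⊕ ⊖ h.
  rewrite ex (ccD he _ (FN hh)) (ccFF he (FN hh)).
  by rewrite /cc hee addN add0.
rewrite px /= ccx; clearbody h f; rewrite !oppD !oppK.
by rewrite -(addA (⊖ h)) addKr.
Qed.

End Iso.

End Main.

End Brace.

Section Conv.
Local Open Scope ring_scope.
Variable F : finZmodType.
Local Notation add := (sd_add (@GRing.add F) (@GRing.opp F)).
Local Notation circ := (sd_circ (@GRing.add F) (@GRing.opp F)).
Definition sopp (p : F * bool) : F * bool := (- sgn_act (@GRing.opp F) p.2 p.1, p.2).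
Definition scinv (p : F * bool) : F * bool := (- p.1, p.2).

Definition L3 (x y w : F) (p : int * int * int) : F :=
  x *~ p.1.1 + y *~ p.1.2 + w *~ p.2.
Lemma L3D x y w p q : L3 x y w p + L3 x y w q = L3 x y w (p + q).
Proof.
rewrite /L3 /= !mulrzDr.
by rewrite [LHS]addrACA; congr (_ + _); rewrite [LHS]addrACA.
Qed.
Lemma L3N x y w p : - L3 x y w p = L3 x y w (- p).
Proof. by rewrite /L3 /= !mulrNz !opprD. Qed.
Lemma L3a x y w : L3 x y w (1, 0, 0) = x.
Proof. by rewrite /L3 /= !mulr0z !addr0. Qed.
Lemma L3b x y w : L3 x y w (0, 1, 0) = y.
Proof. by rewrite /L3 /= !mulr0z add0r addr0. Qed.
Lemma L3c x y w : L3 x y w (0, 0, 1) = w.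
Proof. by rewrite /L3 /= !mulr0z !add0r. Qed.
Lemma L30 x y w : L3 x y w 0 = 0.
Proof. by rewrite /L3 /= !mulr0z !addr0. Qed.

Ltac lin a b c :=
  let f := fresh "f" in pose f := L3 a b c;
  try rewrite -[a](L3a a b c) -/f; try rewrite -[b](L3b a b c) -/f;
  try rewrite -[c](L3c a b c) -/f;
  rewrite /f; repeat (rewrite L3N || rewrite L3D); congr (L3 _ _ _ _); try reflexivity.

Ltac norm := rewrite /sd_add /sd_circ /sopp /scinv /sgn_act /=; congr pair.

Lemma s_addA a b c : add a (add b c) = add (add a b) c.
Proof.
move: a b c => [a1 a2] [b1 b2] [c1 c2]; case: a2; case: b2; case: c2; norm.
all: try by [].
all: lin a1 b1 c1.
Qed.

Lemma s_dist a b c : circ a (add b c) = add (add (circ a b) (sopp a)) (circ a c).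
Proof.
move: a b c => [a1 a2] [b1 b2] [c1 c2]; case: a2; case: b2; case: c2; norm.
all: try by [].
all: lin a1 b1 c1.
Qed.

Lemma s_add0 a : add (0, false) a = a.
Proof. by case: a => [a1 a2]; rewrite /sd_add /sgn_act /= add0r. Qed.

Lemma s_addN a : add (sopp a) a = (0, false).
Proof. by case: a => [a1 []]; norm; rewrite ?addNr ?addxx // opprK addNr. Qed.

Lemma s_circA a b c : circ a (circ b c) = circ (circ a b) c.
Proof.
move: a b c => [a1 a2] [b1 b2] [c1 c2]; case: a2; case: b2; case: c2; norm.
all: try by [].
all: lin a1 b1 c1.
Qed.

Lemma s_circ1 a : circ (0, false) a = a.
Proof. by case: a => [a1 []]; norm; rewrite ?oppr0 add0r. Qed.

Lemma s_circV a : circ (scinv a) a = (0, false).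
Proof. by case: a => [a1 []]; norm; rewrite ?addxx ?opprK ?addrN ?addNr. Qed.

Definition SB : skewBrace (F * bool) :=
  SkewBrace s_addA s_add0 s_addN s_circA s_circ1 s_circV s_dist.

Lemma lamE_f (f1 f2 : F) k1 : sb_lambda SB (f1, k1) (f2, false) = (f2, false).
Proof. by case: k1; rewrite /sb_lambda /=; norm; lin f1 f2 f2. Qed.

Lemma lamE_t (f1 f2 : F) k1 :
  sb_lambda SB (f1, k1) (f2, true) = (f2 - sgn_act (@GRing.opp F) k1 (f1 + f1), true).
Proof. by case: k1; rewrite /sb_lambda /=; norm; lin f1 f2 f2. Qed.

Hypotheses (F1 : (1 < #|F|)%N) (Fodd : odd #|F|).

Lemma no2F (x : F) : x + x = 0 -> x = 0.
Proof.
move=> h.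
have := expg_cardG (in_setT x); rewrite FinRing.zmodXgE cardsT.
have [k ->] : exists k, #|F| = (k.*2).+1.
  by exists (#|F|./2); rewrite -{1}(odd_double_half #|F|) Fodd.
rewrite mulrS -mul2n mulrnA mulr2n h mul0rn addr0 => ->.
by [].
Qed.

Lemma halfF (g : F) : exists h, h + h = g.
Proof.
have inj : injective (fun h : F => h + h).
  move=> x y e; apply/eqP; rewrite -subr_eq0; apply/eqP/no2F.
  by rewrite addrACA e -opprD addrN.
have : g \in [set h + h | h in [set: F]].
  have -> : [set h + h | h in [set: F]] = [set: F].
    by apply/eqP; rewrite eqEcard subsetT card_imset //= cardsT.
  by rewrite inE.
by case/imsetP => h _ ->; exists h.
Qed.

Lemma nonzeroF : exists h : F, h != 0.
Proof.
apply/existsP; apply: contraT; rewrite negb_exists => /forallP h.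
have : (#|F| <= 1)%N.
  apply/fintype_le1P => x y; have := h x; have := h y.
  by rewrite !negbK => /eqP -> /eqP ->.
by rewrite leqNgt F1.
Qed.

Lemma SB_Fix : sb_Fix SB = [set p : F * bool | p.2 == false].
Proof.
apply/setP => [[f []]]; rewrite !inE.
  apply/negbTE; rewrite negb_forall.
  have [h hh] := nonzeroF.
  apply/existsP; exists (h, false); rewrite lamE_t /=.
  apply/eqP => [[]] e.
  have : f + (- (h + h)) = f + 0 by rewrite addr0.
  move/addrI/eqP; rewrite oppr_eq0 => /eqP /no2F.
  by move/eqP: hh.
by apply/forallP => [[x1 x2]]; rewrite lamE_f.
Qed.

Lemma SB_ker : sb_ker SB = [set p : F * bool | p.1 == 0].
Proof.
apply/setP => [[f k]]; rewrite !inE; apply/forallP/eqP => [h|fe]; last first.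
  have {}fe : f = 0 := fe; subst f.
  move=> [y1 []]; last by rewrite lamE_f.
  by rewrite lamE_t addr0; case: k; rewrite /sgn_act ?oppr0 addr0.
  move: (h (0, true)); rewrite lamE_t => /eqP [] e.
  apply: no2F; clear h; move: e; case: k => /= /eqP; rewrite sub0r ?opprK ?oppr_eq0.
  1,2: by move/eqP.
Qed.

Definition Ot : {set F * bool} := [set p | p.2].

Lemma orbit_f (f : F) : lambda_orbit SB (f, false) = [set (f, false)].
Proof.
apply/setP => p; rewrite inE; apply/imsetP/eqP.
  by case=> [[x1 x2]] _ ->; rewrite lamE_f.
by move=> ->; exists (0, false) => //; rewrite lamE_f.
Qed.

Lemma orbit_t (f : F) : lambda_orbit SB (f, true) = Ot.
Proof.
apply/setP => [[g b]]; rewrite inE /=; apply/imsetP/idP.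
  by case=> [[x1 x2]] _; rewrite lamE_t => [[_ ->]].
move=> hb; have [h hh] := halfF (f - g).
exists (h, false) => //; rewrite lamE_t /= hh hb.
by rewrite opprB addrC subrK.
Qed.

Lemma SB_vert : #|Lambda_vertices SB| = 1.
Proof.
suff -> : Lambda_vertices SB = [set Ot] by rewrite cards1.
apply/setP => O; rewrite !inE; apply/andP/eqP.
  case=> /imsetP[[f []] _ ->]; first by rewrite orbit_t.
  by rewrite orbit_f cards1.
move=> ->; split; first by apply/imsetP; exists (0, true); rewrite ?orbit_t.
have [h hh] := nonzeroF.
rewrite (cardsD1 (0, true)) !inE /= add1n ltnS card_gt0.
apply/set0Pn; exists (h, true); rewrite !inE /= andbT.
by apply: contra hh => /eqP [] ->.
Qed.

End Conv.

Theorem mainTheorem14 :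
  (forall (T : finType) (B : skewBrace T),
    #|Lambda_vertices B| = 1 ->
    sb_ker B :&: sb_Fix B = [set sb_zero B] ->
    [/\ (* (Fix(A),+) is a subgroup of (A,+), abelian, of odd order *)
        [/\ sb_zero B \in sb_Fix B,
        {in sb_Fix B &, forall x y, sb_add B x y \in sb_Fix B},
        {in sb_Fix B, forall x, sb_opp B x \in sb_Fix B} &
        {in sb_Fix B &, forall x y, sb_add B x y = sb_add B y x}],
        odd #|sb_Fix B|,
        (* Fix(A) is a trivial skew brace *)
        {in sb_Fix B &, forall x y, sb_add B x y = sb_circ B x y} &
        (* A is isomorphic to the skew brace on Fix(A) x Z/2Z *)
        exists phi : T -> T * bool,
          [/\ injective phi,
              phi @: [set: T] = [set p : T * bool | p.1 \in sb_Fix B],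
              forall a b, phi (sb_add B a b)
                          = sd_add (sb_add B) (sb_opp B) (phi a) (phi b) &
              forall a b, phi (sb_circ B a b)
                          = sd_circ (sb_add B) (sb_opp B) (phi a) (phi b)]])
  /\
  (forall (F : finZmodType),
    1 < #|F| -> odd #|F| ->
    exists B : skewBrace (F * bool),
      [/\ sb_add B = sd_add (@GRing.add F) (@GRing.opp F),
          sb_circ B = sd_circ (@GRing.add F) (@GRing.opp F),
          sb_Fix B = [set p : F * bool | p.2 == false],
          sb_ker B = [set p : F * bool | p.1 == 0%R] &
          #|Lambda_vertices B| = 1]).
Proof.
split.
  move=> T B H1 H2.
  have [a0 ha0] := exists_notF H1.
  have [e he hee] := exists_e H1 H2.
  split.
  - split.
    + exact: F0.
    + by move=> x y hx hy; apply: FD.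
    + by move=> x y; apply: FN.
    + by move=> x y hx hy; apply: (commF H1 ha0 hx hy).
  - exact: odd_F H1 H2.
  - by move=> x y _ hy; rewrite circF.
  exists (phi B e); split.
  - exact: phi_inj.
  - exact: (phi_im H1 H2 he).
  - exact: (phi_add H1 H2 he).
  - exact: (phi_circ H1 H2 he hee).
move=> F F1 Fodd; exists (SB F); split => //.
- exact: SB_Fix.
- exact: SB_ker.
- exact: SB_vert.
Qed.
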